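(* Let $q$ be a prime power and $1\le k\le n-1$. A non-empty set of affine $k$-spaces of $\mathrm{AG}(n,q)$ all contained in a fixed hyperplane of $\mathrm{AG}(n,q)$ is not a Cameron-Liebler $k$-set of $\mathrm{AG}(n,q)$.
   Context: $\mathrm{AG}(n,q)$ is $\mathrm{PG}(n,q)$ with a hyperplane $\pi_\infty$ removed; affine points are points outside $\pi_\infty$, affine $k$-spaces (resp. hyperplanes) are $k$-dimensional (resp. $(n-1)$-dimensional) projective subspaces not contained in $\pi_\infty$. With $A_n$ the incidence matrix of affine points versus affine $k$-spaces, a set of affine $k$-spaces is a Cameron-Liebler $k$-set of $\mathrm{AG}(n,q)$ if its characteristic vector lies in the real row space $\mathrm{Im}(A_n^T)$. *)

(* Defs.v *)
From mathcomp Require Import all_boot all_order all_algebra all_field.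
From mathcomp Require Import reals.
Set Implicit Arguments. Unset Strict Implicit. Unset Printing Implicit Defensive.
Import GRing.Theory Num.Theory.
Local Open Scope ring_scope.

(* AG(n,q) is modelled as the vector space 'rV[F]_n over a finite field F with
   #|F| = q (so q is automatically a prime power).  Affine points are the row
   vectors; an affine k-space is a coset  a + U  of a k-dimensional linear
   subspace U (given as the row space of a square matrix of rank k). *)

Definition affine_space (F : finFieldType) (n k : nat) (S : {set 'rV[F]_n}) : bool :=
  [exists U : 'M[F]_n, exists a : 'rV[F]_n,
     (\rank U == k) && (S == [set x : 'rV[F]_n | (x - a <= U)%MS])].

Definition affine_hyperplane (F : finFieldType) (n : nat) (H : {set 'rV[F]_n}) : bool :=
  affine_space n.-1 H.

(* incidence matrix A_n: rows = affine points, columns = affine k-spaces *)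
Definition incidence (R : realType) (F : finFieldType) (n : nat)
  (p : 'rV[F]_n) (L : {set 'rV[F]_n}) : R := if p \in L then 1 else 0.

Definition charvec (R : realType) (F : finFieldType) (n : nat)
  (S : {set {set 'rV[F]_n}}) (L : {set 'rV[F]_n}) : R := if L \in S then 1 else 0.

(* S is a Cameron-Liebler k-set: its characteristic vector lies in the real
   row space Im(A_n^T) of A_n, i.e. it is a real linear combination of the rows
   of A_n (the rows being indexed by the affine points). *)
Definition cameron_liebler (R : realType) (F : finFieldType) (n k : nat)
  (S : {set {set 'rV[F]_n}}) : Prop :=
  exists c : 'rV[F]_n -> R,
    forall L : {set 'rV[F]_n}, affine_space k L ->
      charvec R S L = \sum_(p : 'rV[F]_n) c p * incidence R p L.

(* Main.v *)
Require Import Defs.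
From mathcomp Require Import all_boot all_order all_algebra all_field zify.
From mathcomp Require Import reals.
Import GRing.Theory Num.Theory.
Local Open Scope ring_scope.

Lemma coset_sum (R : realType) (F : finFieldType) (n : nat) (U : 'M[F]_n) (c : 'rV[F]_n -> R) :
  \sum_(a : 'rV[F]_n) \sum_(p : 'rV[F]_n) c p * incidence R p [set x : 'rV[F]_n | (x - a <= U)%MS]
  = (\sum_(a : 'rV[F]_n) (if (a <= U)%MS then 1 else 0 : R)) * \sum_(p : 'rV[F]_n) c p.
Proof.
rewrite exchange_big mulr_sumr; apply: eq_bigr => p _.
rewrite -mulr_sumr mulrC; congr (_ * _).
have inv : involutive (fun a : 'rV[F]_n => p - a) by move=> a; rewrite opprB addrC subrK.
rewrite (reindex_inj (inv_inj inv)); apply: eq_bigr => a _.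
by rewrite /incidence inE inv.
Qed.

Lemma Npos (R : realType) (F : finFieldType) (n : nat) (U : 'M[F]_n) :
  (\sum_(a : 'rV[F]_n) (if (a <= U)%MS then 1 else 0 : R)) != 0.
Proof.
rewrite (bigD1 0) //= sub0mx; apply: lt0r_neq0.
rewrite ltr_pwDl // sumr_ge0 // => i _; by case: ifP.
Qed.

Theorem lemma6p2 (R : realType) (F : finFieldType) (n k : nat)
  (hk1 : (1 <= k)%N) (hkn : (k <= n - 1)%N)
  (S : {set {set 'rV[F]_n}})
  (hS : forall L, L \in S -> affine_space k L)
  (hne : S != set0)
  (H : {set 'rV[F]_n}) (hH : affine_hyperplane H)
  (hSH : forall L, L \in S -> L \subset H) :
  ~ cameron_liebler R k S.
Proof.
move=> [c hc].
have CL (U : 'M[F]_n) a : \rank U = k -> charvec R S [set x : 'rV[F]_n | (x - a <= U)%MS]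
   = \sum_p c p * incidence R p [set x : 'rV[F]_n | (x - a <= U)%MS].
  move=> rU; apply: hc; apply/existsP; exists U; apply/existsP; exists a.
  by rewrite rU !eqxx.
case/set0Pn: hne => L0 L0S.
have /existsP [U0 /existsP [a0 /andP [/eqP rU0 /eqP eL0]]] := hS _ L0S.
move: hH => /existsP [W /existsP [b /andP [/eqP rW /eqP eH]]].
set K := (pid_mx k.-1 : 'M[F]_(n, \rank W)) *m row_base W.
set U1 := (W^C + K)%MS.
have KW : (K <= W)%MS by rewrite /K (submx_trans (submxMl _ _)) // eq_row_base.
have rWC : \rank (W^C)%MS = 1%N by rewrite mxrank_compl rW; lia.
have rU1 : \rank U1 = k.
  rewrite /U1 mxrank_disjoint_sum.
    rewrite rWC /K mxrankMfree ?row_base_free // rank_pid_mx; rewrite ?rW; lia.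
  apply/eqP; rewrite -submx0 (submx_trans (capmxS (submx_refl (W^C)%MS) KW)) //.
  by rewrite capmxC capmx_compl.
have notS a : [set x : 'rV[F]_n | (x - a <= U1)%MS] \notin S.
  apply/negP => /hSH /subsetP sub.
  have U1W : (U1 <= W)%MS.
    apply/rV_subP => u uU1.
    have h1 : a \in H by apply: sub; rewrite inE subrr sub0mx.
    have h2 : a + u \in H by apply: sub; rewrite inE addrAC subrr add0r.
    move: h1 h2; rewrite eH !inE => h1 h2.
    have -> : u = (a + u - b) + (-1) *: (a - b).
      by rewrite scaleN1r opprB addrA subrK addrAC subrr add0r.
    by apply: addmx_sub => //; apply: scalemx_sub.
  have : ((W^C)%MS <= W :&: (W^C)%MS)%MS.
    by rewrite sub_capmx submx_refl andbT (submx_trans _ U1W) // addsmxSl.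
  rewrite capmx_compl submx0 => /eqP WC0.
  by move: rWC; rewrite WC0 mxrank0.
have C0 : \sum_p c p = 0.
  have E := @coset_sum R F n U1 c.
  have Z : \sum_(a : 'rV[F]_n) \sum_(p : 'rV[F]_n) c p * incidence R p [set x : 'rV[F]_n | (x - a <= U1)%MS] = 0.
    apply: big1 => a _; rewrite -CL //.
    by rewrite /charvec (negbTE (notS a)).
  move: E; rewrite Z => /esym/eqP; rewrite mulf_eq0 (negbTE (@Npos R F n U1)) /=.
  by move/eqP.
have E := @coset_sum R F n U0 c.
have P : 0 < \sum_(a : 'rV[F]_n) \sum_(p : 'rV[F]_n) c p * incidence R p [set x : 'rV[F]_n | (x - a <= U0)%MS].
  rewrite (eq_bigr (fun a => charvec R S [set x : 'rV[F]_n | (x - a <= U0)%MS])); last first.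
    by move=> a _; rewrite CL.
  rewrite (bigD1 a0) //= -eL0 /charvec L0S ltr_pwDl // sumr_ge0 // => i _.
  by case: ifP.
move: P; rewrite E C0 mulr0 => /lt0r_neq0/eqP; by apply.
Qed.
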